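(* Let $M^2$ be a surface in $\mathbb E^4$ all of whose points are flat ($k=\varkappa=0$ everywhere) and whose second fundamental form $\sigma$ vanishes at no point. Then at every point the vectors $\sigma(X,Y)$, $X,Y\in T_pM^2$, span a line in the normal space; let $b$ be a unit normal vector field spanning this line and $l$ a unit normal vector field orthogonal to $b$. For an orthonormal tangent frame $\{x,y\}$ put $\beta_1=g(\nabla'_xb,l)$, $\beta_2=g(\nabla'_yb,l)$ and $\beta=\beta_1^2+\beta_2^2$ (which does not depend on the choice of orthonormal tangent frame). Then at each point of $M^2$ either the Gauss curvature $K$ vanishes or $\beta$ vanishes.
   Context: $\mathbb E^4$ carries the standard metric $g$ and flat Levi-Civita connection $\nabla'$. For a surface $M^2$ parametrized by $z(u,v)$, with $E=g(z_u,z_u)$, $F=g(z_u,z_v)$, $G=g(z_v,z_v)$, $W=\sqrt{EG-F^2}$, second fundamental form $\sigma$, and an orthonormal normal frame $\{e_1,e_2\}$, write $\sigma(z_u,z_u)=c_{11}^1e_1+c_{11}^2e_2$, $\sigma(z_u,z_v)=c_{12}^1e_1+c_{12}^2e_2$, $\sigma(z_v,z_v)=c_{22}^1e_1+c_{22}^2e_2$; put $\Delta_1=c_{11}^1c_{12}^2-c_{11}^2c_{12}^1$, $\Delta_2=c_{11}^1c_{22}^2-c_{11}^2c_{22}^1$, $\Delta_3=c_{12}^1c_{22}^2-c_{12}^2c_{22}^1$, $L=2\Delta_1/W$, $M=\Delta_2/W$, $N=2\Delta_3/W$, and $k=\frac{LN-M^2}{EG-F^2}$, $\varkappa=\frac{EN+GL-2FM}{2(EG-F^2)}$.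 A point is flat if $k=\varkappa=0$ there (equivalently $L=M=N=0$). *)

(* Defs.v *)
From Stdlib Require Import Reals.
Open Scope R_scope.

Record V4 := mkV { v0 : R; v1 : R; v2 : R; v3 : R }.

Definition vzero : V4 := mkV 0 0 0 0.
Definition vadd (a b : V4) : V4 :=
  mkV (v0 a + v0 b) (v1 a + v1 b) (v2 a + v2 b) (v3 a + v3 b).
Definition vscal (t : R) (a : V4) : V4 :=
  mkV (t * v0 a) (t * v1 a) (t * v2 a) (t * v3 a).
Definition vsub (a b : V4) : V4 := vadd a (vscal (-1) b).
Definition dot (a b : V4) : R :=
  v0 a * v0 b + v1 a * v1 b + v2 a * v2 b + v3 a * v3 b.

Definition has_pdu (f f' : R -> R -> V4) (u v : R) : Prop :=
  derivable_pt_lim (fun s => v0 (f s v)) u (v0 (f' u v)) /\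
  derivable_pt_lim (fun s => v1 (f s v)) u (v1 (f' u v)) /\
  derivable_pt_lim (fun s => v2 (f s v)) u (v2 (f' u v)) /\
  derivable_pt_lim (fun s => v3 (f s v)) u (v3 (f' u v)).

Definition has_pdv (f f' : R -> R -> V4) (u v : R) : Prop :=
  derivable_pt_lim (fun s => v0 (f u s)) v (v0 (f' u v)) /\
  derivable_pt_lim (fun s => v1 (f u s)) v (v1 (f' u v)) /\
  derivable_pt_lim (fun s => v2 (f u s)) v (v2 (f' u v)) /\
  derivable_pt_lim (fun s => v3 (f u s)) v (v3 (f' u v)).

Definition open2 (U : R -> R -> Prop) : Prop :=
  forall u v, U u v -> exists r, 0 < r /\
    forall u' v', (u' - u)^2 + (v' - v)^2 < r^2 -> U u' v'.

Definition cont_on2 (U : R -> R -> Prop) (f : R -> R -> V4) : Prop :=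
  forall u v, U u v -> forall eps, 0 < eps -> exists delta, 0 < delta /\
    forall u' v', U u' v' -> (u' - u)^2 + (v' - v)^2 < delta^2 ->
      dot (vsub (f u' v') (f u v)) (vsub (f u' v') (f u v)) < eps^2.

(** A smooth (C^infinity) parametrized surface piece z : U -> E^4.
    D i j is the mixed partial derivative  d^i/du^i d^j/dv^j z. *)
Definition smooth_param (U : R -> R -> Prop) (z : R -> R -> V4)
    (D : nat -> nat -> R -> R -> V4) : Prop :=
  open2 U /\
  (forall u v, U u v -> D 0%nat 0%nat u v = z u v) /\
  (forall i j u v, U u v ->
     has_pdu (D i j) (D (S i) j) u v /\ has_pdv (D i j) (D i (S j)) u v) /\
  (forall i j, cont_on2 U (D i j)).

Section Surface.
Variable D : nat -> nat -> R -> R -> V4.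
Variables u v : R.

Definition zu := D 1 0 u v.
Definition zv := D 0 1 u v.
Definition zuu := D 2 0 u v.
Definition zuv := D 1 1 u v.
Definition zvv := D 0 2 u v.

Definition E_ := dot zu zu.
Definition F_ := dot zu zv.
Definition G_ := dot zv zv.
Definition W2 := E_ * G_ - F_ ^ 2.
Definition W := sqrt W2.

Definition regular_at : Prop := 0 < W2.

Definition is_normal (w : V4) : Prop := dot w zu = 0 /\ dot w zv = 0.
Definition is_tangent_coef (a c : R) : V4 := vadd (vscal a zu) (vscal c zv).

(** normal component of a vector w at the point *)
Definition nor (w : V4) : V4 :=
  vsub w (vadd
    (vscal ((G_ * dot w zu - F_ * dot w zv) / W2) zu)
    (vscal ((E_ * dot w zv - F_ * dot w zu) / W2) zv)).

(** second fundamental form on coordinate vectors: sigma(X,Y) = (nabla'_X Y)^normal *)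
Definition s11 := nor zuu.
Definition s12 := nor zuv.
Definition s22 := nor zvv.

Definition kk (e1 e2 : V4) : R :=
  let c111 := dot s11 e1 in let c112 := dot s11 e2 in
  let c121 := dot s12 e1 in let c122 := dot s12 e2 in
  let c221 := dot s22 e1 in let c222 := dot s22 e2 in
  let D1 := c111 * c122 - c112 * c121 in
  let D2 := c111 * c222 - c112 * c221 in
  let D3 := c121 * c222 - c122 * c221 in
  let L := 2 * D1 / W in let M := D2 / W in let N := 2 * D3 / W in
  (L * N - M ^ 2) / W2.

Definition varkappa (e1 e2 : V4) : R :=
  let c111 := dot s11 e1 in let c112 := dot s11 e2 in
  let c121 := dot s12 e1 in let c122 := dot s12 e2 in
  let c221 := dot s22 e1 in let c222 := dot s22 e2 in
  let D1 := c111 * c122 - c112 * c121 in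
  let D2 := c111 * c222 - c112 * c221 in
  let D3 := c121 * c222 - c122 * c221 in
  let L := 2 * D1 / W in let M := D2 / W in let N := 2 * D3 / W in
  (E_ * N + G_ * L - 2 * F_ * M) / (2 * W2).

Definition orthonormal_normal_frame (e1 e2 : V4) : Prop :=
  is_normal e1 /\ is_normal e2 /\
  dot e1 e1 = 1 /\ dot e2 e2 = 1 /\ dot e1 e2 = 0.

Definition flat_point : Prop :=
  forall e1 e2, orthonormal_normal_frame e1 e2 ->
    kk e1 e2 = 0 /\ varkappa e1 e2 = 0.

Definition sigma_nonzero : Prop :=
  ~ (s11 = vzero /\ s12 = vzero /\ s22 = vzero).

(** Gauss curvature, via the Gauss equation of the flat ambient space E^4:
    K = (g(sigma(z_u,z_u),sigma(z_v,z_v)) - g(sigma(z_u,z_v),sigma(z_u,z_v)))/(EG-F^2) *)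
Definition gaussK : R := (dot s11 s22 - dot s12 s12) / W2.

End Surface.

(* Main.v *)
Require Import Defs.
From Stdlib Require Import Reals Lra Psatz FunctionalExtensionality.
Open Scope R_scope.

Lemma dl_ext (f g : R -> R) x l : (forall s, f s = g s) -> derivable_pt_lim g x l -> derivable_pt_lim f x l.
Proof. intros H; replace f with g; auto. apply functional_extensionality; intros; auto. Qed.

Lemma cp_ext (f g : R -> R) x : (forall s, f s = g s) -> continuity_pt g x -> continuity_pt f x.
Proof. intros H; replace f with g; auto. apply functional_extensionality; intros; auto. Qed.

Lemma deriv_local f F x r L : 0 < r -> (forall s, Rabs (s - x) < r -> f s = F s) ->
  derivable_pt_lim F x L -> derivable_pt_lim f x L.
Proof.
  intros Hr Hl HF eps He. destruct (HF eps He) as [del Hd].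
  assert (Hm : 0 < Rmin del r) by (apply Rmin_glb_lt; [apply cond_pos|lra]).
  exists (mkposreal _ Hm). intros h hn hl. simpl in hl.
  rewrite (Hl (x+h)), (Hl x).
  - apply Hd; auto. apply Rlt_le_trans with (1 := hl). apply Rmin_l.
  - replace (x - x) with 0 by ring. rewrite Rabs_R0; lra.
  - replace (x + h - x) with h by ring. apply Rlt_le_trans with (1 := hl). apply Rmin_r.
Qed.

Lemma prod0 (g k : R -> R) x d : k x = 0 -> derivable_pt_lim k x d -> continuity_pt g x ->
  derivable_pt_lim (fun s => g s * k s) x (g x * d).
Proof.
  intros Hk0 Hk Hg eps He.
  set (G := Rabs (g x)). set (M := Rabs d + 1).
  assert (HG : 0 <= G) by apply Rabs_pos.
  assert (HM : 0 < M) by (unfold M; generalize (Rabs_pos d); lra).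
  assert (He1 : 0 < eps / (2 * M)) by (apply Rdiv_lt_0_compat; lra).
  assert (He2 : 0 < Rmin 1 (eps / (2 * (G + 1)))) by
    (apply Rmin_glb_lt; [lra | apply Rdiv_lt_0_compat; lra]).
  unfold continuity_pt, continue_in, limit1_in, limit_in in Hg. simpl in Hg.
  unfold R_dist in Hg.
  destruct (Hg _ He1) as [alp [Halp Ha]].
  destruct (Hk _ He2) as [del Hd].
  assert (Hm : 0 < Rmin del alp) by (apply Rmin_glb_lt; [apply cond_pos|lra]).
  exists (mkposreal _ Hm). intros h hn hl. simpl in hl.
  assert (h1 : Rabs h < del) by (apply Rlt_le_trans with (1 := hl); apply Rmin_l).
  assert (h2 : Rabs h < alp) by (apply Rlt_le_trans with (1 := hl); apply Rmin_r).
  specialize (Hd h hn h1). rewrite Hk0 in Hd.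
  set (q := k (x + h) / h) in *.
  replace ((k (x + h) - 0) / h) with q in Hd by (unfold q; field; auto).
  assert (Hga : Rabs (g (x + h) - g x) < eps / (2 * M)).
  { apply Ha. split. split; [exact I | intro E; apply hn; lra].
    replace (x + h - x) with h by ring. auto. }
  replace ((g (x + h) * k (x + h) - g x * k x) / h - g x * d)
    with ((g (x + h) - g x) * q + g x * (q - d)) by (unfold q; rewrite Hk0; field; auto).
  assert (Hq1 : Rabs (q - d) < 1) by (apply Rlt_le_trans with (1 := Hd); apply Rmin_l).
  assert (Hq2 : Rabs (q - d) < eps / (2 * (G + 1))) by (apply Rlt_le_trans with (1 := Hd); apply Rmin_r).
  assert (Hq : Rabs q <= M).
  { unfold M. replace q with ((q - d) + d) by ring.
    generalize (Rabs_triang (q - d) d). lra. }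
  eapply Rle_lt_trans. apply Rabs_triang. rewrite !Rabs_mult.
  assert (A1 : Rabs (g (x + h) - g x) * Rabs q < eps / (2 * M) * M).
  { apply Rle_lt_trans with (Rabs (g (x + h) - g x) * M).
    apply Rmult_le_compat_l; [apply Rabs_pos|lra].
    apply Rmult_lt_compat_r; lra. }
  assert (A2 : G * Rabs (q - d) <= (G + 1) * (eps / (2 * (G + 1)))).
  { apply Rmult_le_compat; try apply Rabs_pos; lra. }
  replace (eps / (2 * M) * M) with (eps / 2) in A1 by (field; lra).
  replace ((G + 1) * (eps / (2 * (G + 1)))) with (eps / 2) in A2 by (field; lra).
  fold G. lra.
Qed.

Lemma key (f k1 k2 k3 g1 g2 g3 : R -> R) x r L d1 d2 d3 :
  0 < r -> (forall s, Rabs (s - x) < r -> f s = g1 s * k1 s + g2 s * k2 s + g3 s * k3 s) ->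
  derivable_pt_lim f x L ->
  derivable_pt_lim k1 x d1 -> derivable_pt_lim k2 x d2 -> derivable_pt_lim k3 x d3 ->
  k1 x = 0 -> k2 x = 0 -> k3 x = 0 ->
  continuity_pt g1 x -> continuity_pt g2 x -> continuity_pt g3 x ->
  L = g1 x * d1 + g2 x * d2 + g3 x * d3.
Proof.
  intros Hr Hl Hf H1 H2 H3 E1 E2 E3 C1 C2 C3.
  apply (uniqueness_limite f x); auto.
  apply (deriv_local f _ x r _ Hr Hl).
  apply (derivable_pt_lim_plus (fun s => g1 s * k1 s + g2 s * k2 s) (fun s => g3 s * k3 s)).
  apply (derivable_pt_lim_plus (fun s => g1 s * k1 s) (fun s => g2 s * k2 s)).
  all: apply prod0; auto.
Qed.

Definition vderiv (A : R -> V4) (x : R) (A' : V4) : Prop :=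
  derivable_pt_lim (fun s => v0 (A s)) x (v0 A') /\
  derivable_pt_lim (fun s => v1 (A s)) x (v1 A') /\
  derivable_pt_lim (fun s => v2 (A s)) x (v2 A') /\
  derivable_pt_lim (fun s => v3 (A s)) x (v3 A').

Definition vc (A : R -> V4) (x : R) : Prop :=
  continuity_pt (fun s => v0 (A s)) x /\ continuity_pt (fun s => v1 (A s)) x /\
  continuity_pt (fun s => v2 (A s)) x /\ continuity_pt (fun s => v3 (A s)) x.

Lemma vderiv_vc A x A' : vderiv A x A' -> vc A x.
Proof.
  intros [H0 [H1 [H2 H3]]]; repeat split; eapply derivable_continuous_pt;
  eexists; eassumption.
Qed.

Lemma dl_mulc f x l c : derivable_pt_lim f x l -> derivable_pt_lim (fun s => f s * c) x (l * c).
Proof.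
  intros H. generalize (derivable_pt_lim_scal f c x l H). unfold mult_real_fct. intro H'.
  replace (l * c) with (c * l) by ring. apply (dl_ext _ _ _ _ (fun s => Rmult_comm _ _) H').
Qed.

Lemma dot_deriv A x A' c : vderiv A x A' -> derivable_pt_lim (fun s => dot (A s) c) x (dot A' c).
Proof.
  intros [H0 [H1 [H2 H3]]]. unfold dot.
  repeat apply (derivable_pt_lim_plus (fun s => _) (fun s => _)); apply dl_mulc; auto.
Qed.

Lemma cp_plus f g x : continuity_pt f x -> continuity_pt g x -> continuity_pt (fun s => f s + g s) x.
Proof. intros; exact (continuity_pt_plus f g x H H0). Qed.
Lemma cp_minus f g x : continuity_pt f x -> continuity_pt g x -> continuity_pt (fun s => f s - g s) x.
Proof. intros; exact (continuity_pt_minus f g x H H0). Qed.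
Lemma cp_mult f g x : continuity_pt f x -> continuity_pt g x -> continuity_pt (fun s => f s * g s) x.
Proof. intros; exact (continuity_pt_mult f g x H H0). Qed.
Lemma cp_div f g x : continuity_pt f x -> continuity_pt g x -> g x <> 0 -> continuity_pt (fun s => f s / g s) x.
Proof. intros; exact (continuity_pt_div f g x H H0 H1). Qed.
Lemma cp_pow2 f x : continuity_pt f x -> continuity_pt (fun s => f s ^ 2) x.
Proof. intros; apply (cp_ext _ (fun s => f s * f s)). intros; ring. apply cp_mult; auto. Qed.

Lemma cp_dot A B x : vc A x -> vc B x -> continuity_pt (fun s => dot (A s) (B s)) x.
Proof.
  intros [A0 [A1 [A2 A3]]] [B0 [B1 [B2 B3]]]. unfold dot.
  repeat apply cp_plus; apply cp_mult; auto.
Qed.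

Definition den (zu zv : V4) := dot zu zu * dot zv zv - dot zu zv ^ 2.
Definition alc (zu zv w : V4) := (dot zv zv * dot w zu - dot zu zv * dot w zv) / den zu zv.
Definition gac (zu zv w : V4) := (dot zu zu * dot w zv - dot zu zv * dot w zu) / den zu zv.

Lemma line_lemma (ZU ZV Wf Bf : R -> V4) (ZU' ZV' W' B' lv : V4) x r :
  0 < r ->
  (forall s, Rabs (s - x) < r -> dot (Wf s) lv =
     alc (ZU s) (ZV s) (Wf s) * dot (ZU s) lv + gac (ZU s) (ZV s) (Wf s) * dot (ZV s) lv
     + dot (Wf s) (Bf s) * dot (Bf s) lv) ->
  vderiv ZU x ZU' -> vderiv ZV x ZV' -> vderiv Wf x W' -> vderiv Bf x B' ->
  dot (ZU x) lv = 0 -> dot (ZV x) lv = 0 -> dot (Bf x) lv = 0 ->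
  den (ZU x) (ZV x) <> 0 ->
  dot W' lv = alc (ZU x) (ZV x) (Wf x) * dot ZU' lv + gac (ZU x) (ZV x) (Wf x) * dot ZV' lv
     + dot (Wf x) (Bf x) * dot B' lv.
Proof.
  intros Hr Hl DU DV DW DB E1 E2 E3 Hd.
  assert (CU := vderiv_vc _ _ _ DU). assert (CV := vderiv_vc _ _ _ DV).
  assert (CW := vderiv_vc _ _ _ DW). assert (CB := vderiv_vc _ _ _ DB).
  assert (Cden : continuity_pt (fun s => den (ZU s) (ZV s)) x).
  { unfold den. apply cp_minus. apply cp_mult; apply cp_dot; auto.
    apply cp_pow2; apply cp_dot; auto. }
  apply (key (fun s => dot (Wf s) lv) (fun s => dot (ZU s) lv) (fun s => dot (ZV s) lv)
    (fun s => dot (Bf s) lv) (fun s => alc (ZU s) (ZV s) (Wf s)) (fun s => gac (ZU s) (ZV s) (Wf s))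
    (fun s => dot (Wf s) (Bf s)) x r); auto; try (apply dot_deriv; auto).
  - unfold alc. apply cp_div; auto. apply cp_minus; apply cp_mult; apply cp_dot; auto.
  - unfold gac. apply cp_div; auto. apply cp_minus; apply cp_mult; apply cp_dot; auto.
  - apply cp_dot; auto.
Qed.

Lemma veq a b : v0 a = v0 b -> v1 a = v1 b -> v2 a = v2 b -> v3 a = v3 b -> a = b.
Proof. destruct a, b; simpl; intros; subst; auto. Qed.

Lemma pd zu zv w bb lv t : dot bb zu = 0 -> dot bb zv = 0 -> dot bb bb = 1 ->
  vsub w (vadd (vscal (alc zu zv w) zu) (vscal (gac zu zv w) zv)) = vscal t bb ->
  t = dot w bb /\
  dot w lv = alc zu zv w * dot zu lv + gac zu zv w * dot zv lv + dot w bb * dot bb lv.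
Proof.
  intros N1 N2 N3 H.
  set (al := alc zu zv w) in *. set (ga := gac zu zv w) in *.
  assert (Hw : w = vadd (vscal t bb) (vadd (vscal al zu) (vscal ga zv))).
  { destruct w, bb, zu, zv; unfold vsub, vadd, vscal in *; simpl in *.
    injection H; intros; apply veq; simpl; lra. }
  assert (Ht : t = dot w bb).
  { rewrite Hw.
    assert (E : dot (vadd (vscal t bb) (vadd (vscal al zu) (vscal ga zv))) bb =
      t * dot bb bb + al * dot bb zu + ga * dot bb zv)
      by (destruct bb, zu, zv; unfold dot, vadd, vscal; simpl; ring).
    rewrite E, N1, N2, N3; ring. }
  split; auto. rewrite <- Ht. rewrite Hw.
  destruct bb, zu, zv, lv; unfold dot, vadd, vscal; simpl. ring.
Qed.

Lemma dot_comm a c : dot a c = dot c a.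
Proof. unfold dot; ring. Qed.
Lemma dot_scal a p c q : dot (vscal a p) (vscal c q) = a * c * dot p q.
Proof. unfold dot, vscal; simpl; ring. Qed.

Theorem mainTheorem4
  (U : R -> R -> Prop) (z : R -> R -> V4) (D : nat -> nat -> R -> R -> V4)
  (b bu bv l : R -> R -> V4) :
  smooth_param U z D ->
  (forall u v, U u v -> regular_at D u v) ->
  (forall u v, U u v -> flat_point D u v) ->
  (forall u v, U u v -> sigma_nonzero D u v) ->
  (forall u v, U u v -> has_pdu b bu u v /\ has_pdv b bv u v) ->
  (forall u v, U u v ->
     is_normal D u v (b u v) /\ dot (b u v) (b u v) = 1 /\
     (exists t, s11 D u v = vscal t (b u v)) /\
     (exists t, s12 D u v = vscal t (b u v)) /\
     (exists t, s22 D u v = vscal t (b u v))) ->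
  (forall u v, U u v ->
     is_normal D u v (l u v) /\ dot (l u v) (l u v) = 1 /\ dot (b u v) (l u v) = 0) ->
  forall u v, U u v ->
  forall a1 c1 a2 c2,
    let x := is_tangent_coef D u v a1 c1 in
    let y := is_tangent_coef D u v a2 c2 in
    dot x x = 1 -> dot y y = 1 -> dot x y = 0 ->
    let beta1 := dot (vadd (vscal a1 (bu u v)) (vscal c1 (bv u v))) (l u v) in
    let beta2 := dot (vadd (vscal a2 (bu u v)) (vscal c2 (bv u v))) (l u v) in
    gaussK D u v = 0 \/ beta1 ^ 2 + beta2 ^ 2 = 0.
Proof.
  intros Hsm Hreg _ _ Hbd Hb Hl u v Huv a1 c1 a2 c2 x y _ _ _ beta1 beta2.
  destruct Hsm as [Hopen [_ [HDd _]]].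
  assert (PDg : forall s t w tt, U s t -> nor D s t w = vscal tt (b s t) -> forall lv,
    tt = dot w (b s t) /\
    dot w lv = alc (D 1%nat 0%nat s t) (D 0%nat 1%nat s t) w * dot (D 1%nat 0%nat s t) lv
      + gac (D 1%nat 0%nat s t) (D 0%nat 1%nat s t) w * dot (D 0%nat 1%nat s t) lv + dot w (b s t) * dot (b s t) lv).
  { intros s t w tt Hst E lv. destruct (Hb s t Hst) as [[N1 N2] [N3 _]].
    apply pd; auto. }
  assert (LOC : forall s t w, U s t -> (w = D 2%nat 0%nat s t \/ w = D 1%nat 1%nat s t \/ w = D 0%nat 2%nat s t) ->
    forall lv, dot w lv = alc (D 1%nat 0%nat s t) (D 0%nat 1%nat s t) w * dot (D 1%nat 0%nat s t) lv
      + gac (D 1%nat 0%nat s t) (D 0%nat 1%nat s t) w * dot (D 0%nat 1%nat s t) lv + dot w (b s t) * dot (b s t) lv).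
  { intros s t w Hst Hw lv.
    destruct (Hb s t Hst) as [_ [_ [[t1 E1] [[t2 E2] [t3 E3]]]]].
    destruct Hw as [ -> | [ -> | -> ] ].
    - exact (proj2 (PDg s t _ t1 Hst E1 lv)).
    - exact (proj2 (PDg s t _ t2 Hst E2 lv)).
    - exact (proj2 (PDg s t _ t3 Hst E3 lv)). }
  destruct (Hopen u v Huv) as [r [Hr Hball]].
  assert (NU : forall s, Rabs (s - u) < r -> U s v).
  { intros s Hs. apply Hball. apply Rabs_def2 in Hs. destruct Hs. nra. }
  assert (NV : forall s, Rabs (s - v) < r -> U u s).
  { intros s Hs. apply Hball. apply Rabs_def2 in Hs. destruct Hs. nra. }
  set (l0 := l u v).
  destruct (Hl u v Huv) as [[L1 L2] [_ L3]]. fold l0 in L1, L2, L3.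
  assert (Hden : den (D 1%nat 0%nat u v) (D 0%nat 1%nat u v) <> 0).
  { generalize (Hreg u v Huv). unfold regular_at, W2, E_, F_, G_, zu, zv, den. lra. }
  assert (L1' : dot (D 1%nat 0%nat u v) l0 = 0) by (rewrite dot_comm; exact L1).
  assert (L2' : dot (D 0%nat 1%nat u v) l0 = 0) by (rewrite dot_comm; exact L2).
  assert (Z20 : dot (D 2%nat 0%nat u v) l0 = 0).
  { rewrite (LOC u v _ Huv (or_introl eq_refl) l0), L1', L2', L3. ring. }
  assert (Z11 : dot (D 1%nat 1%nat u v) l0 = 0).
  { rewrite (LOC u v _ Huv (or_intror (or_introl eq_refl)) l0), L1', L2', L3. ring. }
  assert (Z02 : dot (D 0%nat 2%nat u v) l0 = 0).
  { rewrite (LOC u v _ Huv (or_intror (or_intror eq_refl)) l0), L1', L2', L3. ring. }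
  (* Codazzi equations *)
  assert (C1 := line_lemma (fun s => D 1%nat 0%nat s v) (fun s => D 0%nat 1%nat s v) (fun s => D 1%nat 1%nat s v)
    (fun s => b s v) (D 2%nat 0%nat u v) (D 1%nat 1%nat u v) (D 2%nat 1%nat u v) (bu u v) l0 u r Hr
    (fun s Hs => LOC s v _ (NU s Hs) (or_intror (or_introl eq_refl)) l0)
    (proj1 (HDd 1%nat 0%nat u v Huv)) (proj1 (HDd 0%nat 1%nat u v Huv))
    (proj1 (HDd 1%nat 1%nat u v Huv)) (proj1 (Hbd u v Huv)) L1' L2' L3 Hden).
  assert (C2 := line_lemma (fun s => D 1%nat 0%nat u s) (fun s => D 0%nat 1%nat u s) (fun s => D 2%nat 0%nat u s)
    (fun s => b u s) (D 1%nat 1%nat u v) (D 0%nat 2%nat u v) (D 2%nat 1%nat u v) (bv u v) l0 v r Hr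
    (fun s Hs => LOC u s _ (NV s Hs) (or_introl eq_refl) l0)
    (proj2 (HDd 1%nat 0%nat u v Huv)) (proj2 (HDd 0%nat 1%nat u v Huv))
    (proj2 (HDd 2%nat 0%nat u v Huv)) (proj2 (Hbd u v Huv)) L1' L2' L3 Hden).
  assert (C3 := line_lemma (fun s => D 1%nat 0%nat s v) (fun s => D 0%nat 1%nat s v) (fun s => D 0%nat 2%nat s v)
    (fun s => b s v) (D 2%nat 0%nat u v) (D 1%nat 1%nat u v) (D 1%nat 2%nat u v) (bu u v) l0 u r Hr
    (fun s Hs => LOC s v _ (NU s Hs) (or_intror (or_intror eq_refl)) l0)
    (proj1 (HDd 1%nat 0%nat u v Huv)) (proj1 (HDd 0%nat 1%nat u v Huv))
    (proj1 (HDd 0%nat 2%nat u v Huv)) (proj1 (Hbd u v Huv)) L1' L2' L3 Hden).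
  assert (C4 := line_lemma (fun s => D 1%nat 0%nat u s) (fun s => D 0%nat 1%nat u s) (fun s => D 1%nat 1%nat u s)
    (fun s => b u s) (D 1%nat 1%nat u v) (D 0%nat 2%nat u v) (D 1%nat 2%nat u v) (bv u v) l0 v r Hr
    (fun s Hs => LOC u s _ (NV s Hs) (or_intror (or_introl eq_refl)) l0)
    (proj2 (HDd 1%nat 0%nat u v Huv)) (proj2 (HDd 0%nat 1%nat u v Huv))
    (proj2 (HDd 1%nat 1%nat u v Huv)) (proj2 (Hbd u v Huv)) L1' L2' L3 Hden).
  simpl in C1, C2, C3, C4.
  rewrite Z20, Z11 in C1, C3. rewrite Z11, Z02 in C2, C4.
  set (pu := dot (bu u v) l0) in *. set (pv := dot (bv u v) l0) in *.
  set (H11 := dot (D 2%nat 0%nat u v) (b u v)) in *.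
  set (H12 := dot (D 1%nat 1%nat u v) (b u v)) in *.
  set (H22 := dot (D 0%nat 2%nat u v) (b u v)) in *.
  assert (E1 : H12 * pu = H11 * pv) by lra.
  assert (E2 : H22 * pu = H12 * pv) by lra.
  assert (Hb1 : beta1 = a1 * pu + c1 * pv)
    by (unfold beta1, pu, pv, l0; unfold dot, vadd, vscal; simpl; ring).
  assert (Hb2 : beta2 = a2 * pu + c2 * pv)
    by (unfold beta2, pu, pv, l0; unfold dot, vadd, vscal; simpl; ring).
  destruct (Hb u v Huv) as [_ [Nbb [[t1 T1] [[t2 T2] [t3 T3]]]]].
  assert (e1 := proj1 (PDg u v _ t1 Huv T1 l0)).
  assert (e2 := proj1 (PDg u v _ t2 Huv T2 l0)).
  assert (e3 := proj1 (PDg u v _ t3 Huv T3 l0)).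
  fold H11 in e1. fold H12 in e2. fold H22 in e3.
  assert (HK : gaussK D u v = (H11 * H22 - H12 * H12) / W2 D u v).
  { unfold gaussK. rewrite T1, T2, T3, !dot_scal, Nbb, e1, e2, e3. unfold zuu, zvv, zuv, H11, H12, H22; unfold Rdiv; ring. }
  destruct (Req_dec (H11 * H22 - H12 * H12) 0) as [Hz|Hz].
  - left. rewrite HK, Hz. unfold Rdiv; ring.
  - right.
    assert (P1 : (H11 * H22 - H12 * H12) * pu = 0).
    { replace ((H11 * H22 - H12 * H12) * pu) with (H11 * (H22 * pu) - H12 * (H12 * pu)) by ring.
      rewrite E1, E2. ring. }
    assert (P2 : (H11 * H22 - H12 * H12) * pv = 0).
    { replace ((H11 * H22 - H12 * H12) * pv) with (H22 * (H11 * pv) - H12 * (H12 * pv)) by ring.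
      rewrite <- E1, <- E2. ring. }
    apply Rmult_integral in P1. apply Rmult_integral in P2.
    destruct P1 as [P1|P1]; [contradiction|]. destruct P2 as [P2|P2]; [contradiction|].
    rewrite Hb1, Hb2, P1, P2. ring.
Qed.
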